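(* Let $(X,\mathcal{B},\mu,T)$ be a probability measure-preserving system, $f\in L^2\cap L^\infty(X,\mu)$, and $\{n_i\}_{i\ge1}\subset\mathbb{N}$ a strictly increasing sequence. Suppose there exist $\alpha>0$ and $C>0$ such that $f_0=f-\int_X f\,d\mu$ satisfies $|\langle f_0\circ T^n,f_0\rangle|\le Cn^{-\alpha}$ for all $n\ge1$. Then for $\mu$-almost every $x\in X$, $$\frac1N\sum_{i=1}^N f(T^{n_i}x)\longrightarrow\int_X f\,d\mu\quad(N\to\infty).$$
   Context: $\langle g,h\rangle=\int_X g\overline{h}\,d\mu$. *)

(* Defs.v *)
From HB Require Import structures.
From mathcomp Require Import all_boot all_order all_algebra.
From mathcomp Require Import all_classical all_reals all_analysis.
Set Implicit Arguments. Unset Strict Implicit. Unset Printing Implicit Defensive.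
Import Order.TTheory GRing.Theory Num.Theory numFieldNormedType.Exports.
Local Open Scope classical_set_scope.
Local Open Scope ring_scope.

(* A complex-valued function f = fr + i fi is encoded by its real and
   imaginary parts fr, fi : X -> R. *)

Definition measure_preserving d (X : measurableType d) (R : realType)
  (P : probability X R) (T : X -> X) : Prop :=
  measurable_fun setT T /\
  forall A : set X, measurable A -> P (T @^-1` A) = P A.

Definition ess_bounded d (X : measurableType d) (R : realType)
  (P : probability X R) (g : X -> R) : Prop :=
  exists M : R, {ae P, forall x, `|g x| <= M}.

Definition square_integrable d (X : measurableType d) (R : realType)
  (P : probability X R) (g : X -> R) : Prop :=
  P.-integrable setT (fun x => ((g x) ^+ 2)%:E).

Definition mean d (X : measurableType d) (R : realType)
  (P : probability X R) (g : X -> R) : R := Rintegral P setT g.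

(* Real and imaginary part of <u, v> = \int_X u * conj v dmu
   for u = a + i b, v = c + i e : u conj v = (a c + b e) + i (b c - a e). *)
Definition inner_re d (X : measurableType d) (R : realType)
  (P : probability X R) (a b c e : X -> R) : R :=
  Rintegral P setT (fun x => a x * c x + b x * e x).
Definition inner_im d (X : measurableType d) (R : realType)
  (P : probability X R) (a b c e : X -> R) : R :=
  Rintegral P setT (fun x => b x * c x - a x * e x).

Definition cmod (R : realType) (re im : R) : R := Num.sqrt (re ^+ 2 + im ^+ 2).

(* N-th ergodic average along the sequence n_1, n_2, ... (encoded as ns 0, ns 1, ...) *)
Definition avg_along d (X : measurableType d) (R : realType)
  (T : X -> X) (ns : nat -> nat) (g : X -> R) (x : X) (N : nat) : R :=
  N%:R^-1 * \sum_(i < N) g (iter (ns i) T x).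

(* Main.v *)
Require Import Defs.
From HB Require Import structures.
From mathcomp Require Import all_boot all_order all_algebra.
From mathcomp Require Import all_classical all_reals all_analysis.
From mathcomp Require Import measurable_realfun.
From mathcomp Require Import ring lra zify.
Import Order.TTheory GRing.Theory Num.Theory numFieldNormedType.Exports.
Local Open Scope classical_set_scope.
Local Open Scope ring_scope.

Set Implicit Arguments. Unset Strict Implicit.

Section A.
Context d (X : measurableType d) (R : realType) (P : probability X R) (T : X -> X).
Hypothesis mpT : measure_preserving P T.

Lemma iter_meas (k : nat) : measurable_fun setT (iter k T).
Proof.
elim: k => [|k IH] /=; first exact: measurable_id.
have := mpT.1 => mT.
exact: (measurableT_comp mT IH).
Qed.

Lemma iter_pres (k : nat) A : measurable A -> P (iter k T @^-1` A) = P A.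
Proof.
elim: k A => [|k IH] A mA /=; first by [].
rewrite (_ : (fun x => T (iter k T x)) @^-1` A = iter k T @^-1` (T @^-1` A)) //.
rewrite IH; first exact: mpT.2.
by rewrite -[_ @^-1` _]setTI; apply: mpT.1.
Qed.

Local Open Scope ereal_scope.
Lemma iter_int_eq (k : nat) (f : X -> \bar R) : measurable_fun setT f ->
  \int[(pushforward P (iter k T))]_x f x = \int[P]_x f x.
Proof.
move=> mf; apply: eq_measure_integral; first by move=> *; apply: iter_meas.
by move=> mT A mA _; rewrite /= /pushforward iter_pres.
Qed.

Lemma iter_integrable (k : nat) (g : X -> R) : measurable_fun setT g ->
  P.-integrable setT (EFin \o g) ->
  P.-integrable setT (EFin \o (g \o iter k T)).
Proof.
move=> mg ig; apply/integrableP; split.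
  by apply/measurable_EFinP; apply: measurableT_comp => //; exact: iter_meas.
have := ge0_integral_pushforward (iter_meas k) P (f := fun x => `|(g x)%:E|) measurableT.
rewrite preimage_setT iter_int_eq; last by apply/measurableT_comp => //; exact/measurable_EFinP.
move=> <- //; first by case/integrableP: ig.
  by apply/measurableT_comp => //; exact/measurable_EFinP.
Qed.

Lemma iter_integral (k : nat) (g : X -> R) : measurable_fun setT g ->
  P.-integrable setT (EFin \o g) ->
  \int[P]_x (g (iter k T x))%:E = \int[P]_x (g x)%:E.
Proof.
move=> mg ig.
have mEg : measurable_fun setT (EFin \o g) by exact/measurable_EFinP.
have := @integral_pushforward _ _ X X R (iter k T) (iter_meas k) P setT (EFin \o g) mEg _ measurableT.
rewrite preimage_setT iter_int_eq //.
move=> <- //.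
exact: iter_integrable.
Qed.
End A.

Local Open Scope ring_scope.

Lemma absM_le (R : realType) (x y : R) : `|x * y| <= x ^+ 2 + y ^+ 2.
Proof.
rewrite normrM -(real_normK (num_real x)) -(real_normK (num_real y)).
have := normr_ge0 x; have := normr_ge0 y; move: `|x| `|y| => p q hp hq.
nra.
Qed.

Section B.
Context d (X : measurableType d) (R : realType) (P : probability X R) (T : X -> X).
Hypothesis mpT : measure_preserving P T.
Variables (a : X -> R).
Hypothesis ma : measurable_fun setT a.
Hypothesis ia : P.-integrable setT (fun x => (a x ^+ 2)%:E).

Lemma sq_iter_int (p : nat) : P.-integrable setT (fun x => (a (iter p T x) ^+ 2)%:E).
Proof.
have := @iter_integrable d X R P T mpT p (fun x => a x ^+ 2).
apply; last exact: ia.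
by apply: measurable_funX.
Qed.

Lemma prod_int (p q : nat) :
  P.-integrable setT (fun x => (a (iter p T x) * a (iter q T x))%:E).
Proof.
have mi := @iter_meas d X R P T mpT.
apply: (@le_integrable _ _ _ _ _ _ _
   (fun x => (a (iter p T x) ^+ 2)%:E + (a (iter q T x) ^+ 2)%:E)).
- exact: measurableT.
- apply/measurable_EFinP; apply: measurable_funM; exact: measurableT_comp.
- move=> x _; rewrite [leRHS]gee0_abs; last by rewrite adde_ge0 // lee_fin sqr_ge0.
  by rewrite /= lee_fin absM_le.
- exact: (integrableD _ (sq_iter_int p) (sq_iter_int q)).
Qed.
End B.

Section B2.
Context d (X : measurableType d) (R : realType) (P : probability X R) (T : X -> X).
Hypothesis mpT : measure_preserving P T.
Variables (a b : X -> R).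
Hypothesis ma : measurable_fun setT a.
Hypothesis mb : measurable_fun setT b.
Hypothesis ia : P.-integrable setT (fun x => (a x ^+ 2)%:E).
Hypothesis ib : P.-integrable setT (fun x => (b x ^+ 2)%:E).

Definition corr (p q : nat) := Rintegral P setT
  (fun x => a (iter p T x) * a (iter q T x) + b (iter p T x) * b (iter q T x)).

Lemma corr_int (p q : nat) : P.-integrable setT
  (fun x => (a (iter p T x) * a (iter q T x) + b (iter p T x) * b (iter q T x))%:E).
Proof.
apply: (eq_integrable measurableT _ _ _ (integrableD measurableT (prod_int mpT ma ia p q) (prod_int mpT mb ib p q))).
by move=> x _; rewrite /= EFinD.
Qed.

Lemma corrE (p q : nat) : (corr p q)%:E = (\int[P]_x
  (a (iter p T x) * a (iter q T x) + b (iter p T x) * b (iter q T x))%:E)%E.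
Proof. by rewrite /corr /Rintegral fineK //; apply: integrable_fin_num => //; exact: corr_int. Qed.

Lemma corrC p q : corr p q = corr q p.
Proof. by rewrite /corr; apply: eq_Rintegral => x _; rewrite (mulrC (a _)) (mulrC (b _)). Qed.

Lemma corr_shift p m : corr p (m + p) = corr 0 m.
Proof.
have mi := @iter_meas d X R P T mpT.
rewrite /corr /Rintegral; congr fine.
have := @iter_integral d X R P T mpT p
  (fun x => a x * a (iter m T x) + b x * b (iter m T x)).
rewrite /=; under eq_integral do rewrite -!iterD.
move=> -> //.
- apply: measurable_funD; apply: measurable_funM => //; exact: measurableT_comp.
- exact: (corr_int 0 m).
Qed.

Local Open Scope ereal_scope.
Lemma int_G (N : nat) (ns : nat -> nat) :
  \int[P]_x (((\sum_(i < N) a (iter (ns i) T x)) ^+ 2 +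
              (\sum_(i < N) b (iter (ns i) T x)) ^+ 2)%:E) =
  (\sum_(i < N) \sum_(j < N) corr (ns i) (ns j))%:E.
Proof.
under eq_integral => x _.
  rewrite (_ : _ + _ = \sum_(i < N) \sum_(j < N)
     (a (iter (ns i) T x) * a (iter (ns j) T x) + b (iter (ns i) T x) * b (iter (ns j) T x)))%R; last first.
    rewrite !expr2 !big_distrl /= -big_split /=; apply: eq_bigr => i _.
    by rewrite !big_distrr -big_split.
  rewrite -sumEFin; under eq_bigr do rewrite -sumEFin.
  over.
rewrite /= (@integral_sum _ _ _ P setT measurableT) //; last first.
  by move=> i; apply: integrable_sum => *; (exact: measurableT || exact: corr_int).
rewrite -sumEFin; apply: eq_bigr => i _.
rewrite (@integral_sum _ _ _ P setT measurableT) //; last by move=> j; exact: corr_int.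
rewrite -sumEFin; apply: eq_bigr => j _.
by rewrite corrE.
Qed.
End B2.

Local Open Scope ring_scope.

Lemma window_count (N lo hi : nat) :
  (\sum_(j < N) (lo <= j <= hi) = minn N hi.+1 - lo)%N.
Proof.
elim: N => [|N IH]; first by rewrite big_ord0.
rewrite big_ord_recr /= IH.
case: (leqP lo N) => h1; case: (leqP N hi) => h2 /=; lia.
Qed.

Lemma dist_count (N M i : nat) :
  (\sum_(j < N) ((i - j) + (j - i) <= M) <= M.*2.+1)%N.
Proof.
apply: (@leq_trans (\sum_(j < N) (i - M <= j <= i + M))%N).
  apply: leq_sum => j _.
  case: (leqP (i - j + (j - i)) M) => h //=.
  have -> : (i - M <= j <= i + M)%N by apply/andP; split; lia.
  by [].
rewrite window_count; lia.
Qed.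

Lemma strict_gap (ns : nat -> nat) :
  {homo ns : i j / (i < j)%N >-> (i < j)%N} ->
  forall i k, (ns i + k <= ns (i + k))%N.
Proof.
move=> hs i; elim=> [|k IH]; first by rewrite !addn0.
have := hs (i + k)%N (i + k).+1 (ltnSn _).
rewrite !addnS; lia.
Qed.

Lemma aux1 (a b i j : nat) : (a + (j - i) <= b)%N -> (i < j)%N -> (1 <= b - a)%N.
Proof. lia. Qed.
Lemma aux2 (a b i j M : nat) : (a + (j - i) <= b)%N -> (i < j)%N ->
  (M < i - j + (j - i))%N -> (M < b - a)%N.
Proof. lia. Qed.

Section C.
Variable R : realType.

Lemma powN_anti (al x y : R) : 0 < al -> 1 <= x -> x <= y -> y `^ (- al) <= x `^ (- al).
Proof.
move=> al0 x1 xy.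
have x0 : 0 < x by lra.
have y0 : 0 < y by lra.
rewrite !powRN lef_pV2 ?posrE ?powR_gt0 //.
apply: ge0_ler_powR; rewrite ?nnegrE; lra.
Qed.

Lemma powN_le1 (al x : R) : 0 < al -> 1 <= x -> x `^ (- al) <= 1.
Proof.
move=> al0 x1; have := powN_anti al0 (lexx 1) x1.
by rewrite powR1.
Qed.

Variables (c : nat -> nat -> R) (C al : R).
Hypothesis cC : forall p q, c p q = c q p.
Hypothesis cS : forall p m, c p (m + p)%N = c 0 m.
Hypothesis cB : forall n, (1 <= n)%N -> `|c 0 n| <= C * n%:R `^ (- al).
Hypothesis C0 : 0 < C.
Hypothesis al0 : 0 < al.
Variable ns : nat -> nat.
Hypothesis hs : {homo ns : i j / (i < j)%N >-> (i < j)%N}.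

Lemma term_bound (M i j : nat) : (1 <= M)%N ->
  c (ns i) (ns j) <= (i == j)%:R * c 0 0 +
     C * ((((i - j) + (j - i) <= M)%N)%:R + M%:R `^ (- al)).
Proof.
move=> M1.
have hM : 0 <= M%:R `^ (- al) :> R by exact: powR_ge0.
have key : forall i j, (i < j)%N -> c (ns i) (ns j) <=
     C * ((((i - j) + (j - i) <= M)%N)%:R + M%:R `^ (- al)).
  move=> {}i {}j lij.
  have g := strict_gap hs i (j - i).
  have eij : (i + (j - i) = j)%N by lia.
  rewrite eij in g.
  have -> : ns j = ((ns j - ns i) + ns i)%N by rewrite subnK //; apply: leq_trans g; exact: leq_addr.
  rewrite cS.
  set m := (ns j - ns i)%N.
  have m1 : (1 <= m)%N by rewrite /m; exact: (aux1 g lij).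
  have m1R : 1 <= m%:R :> R by rewrite ler1n.
  apply: le_trans (ler_norm _) _; apply: le_trans (cB m1) _.
  apply: ler_wpM2l; first exact: ltW.
  case: (leqP (i - j + (j - i)) M) => h /=.
    by rewrite mulr1n -[X in X <= _]addr0 lerD //; exact: powN_le1.
  rewrite add0r; apply: powN_anti => //; first by rewrite ler1n.
  by rewrite ler_nat /m; apply: ltnW; exact: (aux2 g lij h).
case: (ltngtP i j) => h.
- by rewrite mul0r add0r; exact: key.
- by rewrite mul0r add0r cC addnC; exact: key.
- subst j; rewrite mul1r.
  have -> : c (ns i) (ns i) = c 0 0 by rewrite -(cS (ns i) 0).
  rewrite lerDl; apply: mulr_ge0; first exact: ltW.
  by apply: addr_ge0.
Qed.

Lemma sum_bound (M N : nat) : (1 <= M)%N ->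
  \sum_(i < N) \sum_(j < N) c (ns i) (ns j) <=
  N%:R * c 0 0 + C * (N * M.*2.+1)%N%:R + C * (N%:R ^+ 2 * M%:R `^ (- al)).
Proof.
move=> M1.
apply: le_trans (_ : \sum_(i < N) \sum_(j < N) ((i == j)%:R * c 0 0 +
     C * ((((i - j) + (j - i) <= M)%N)%:R + M%:R `^ (- al))) <= _).
  by apply: ler_sum => i _; apply: ler_sum => j _; exact: term_bound.
rewrite -addrA.
have E : forall i : 'I_N, \sum_(j < N) ((i == j)%:R * c 0 0 +
     C * ((((i - j) + (j - i) <= M)%N)%:R + M%:R `^ (- al))) =
   c 0 0 + C * ((\sum_(j < N) ((i - j) + (j - i) <= M)%N)%:R + N%:R * M%:R `^ (- al)).
  move=> i; rewrite big_split /=; congr (_ + _).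
    rewrite (bigD1 i) //= eqxx mul1r big1 ?addr0 // => j /negbTE.
    by rewrite eq_sym => ->; rewrite mul0r.
  rewrite -mulr_sumr big_split /= natr_sum; congr (_ * (_ + _)).
  by rewrite sumr_const card_ord mulr_natl.
rewrite (eq_bigr _ (fun i _ => E i)) big_split /= sumr_const card_ord mulr_natl.
rewrite -[c 0 0 *+ N]mulr_natl lerD2l -mulr_sumr -mulrDr ler_wpM2l //; first exact: ltW.
rewrite big_split /= lerD //.
  rewrite -natr_sum ler_nat.
  apply: (@leq_trans (\sum_(i < N) M.*2.+1)).
    by apply: leq_sum => i _; exact: dist_count.
  by rewrite sum_nat_const card_ord.
by rewrite sumr_const card_ord -mulrnA -natrX mulr_natl expnS expn1.
Qed.
End C.

Local Open Scope ring_scope.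

Section D.
Variable R : realType.
Variables (u : nat -> R) (B : R) (Nk : nat -> nat).
Hypothesis uB : forall i, `|u i| <= B.
Hypothesis Ninc : forall k, (Nk k < Nk k.+1)%N.

Let S N := \sum_(i < N) u i.

Lemma S_diff M d : `|S (M + d)%N - S M| <= d%:R * B.
Proof.
elim: d => [|d IH]; first by rewrite addn0 subrr normr0 mul0r.
rewrite addnS /S big_ord_recr /= -/(S _).
rewrite (_ : S (M + d)%N + u (M + d)%N - S M = (S (M + d)%N - S M) + u (M + d)%N); last by rewrite addrAC.
apply: le_trans (ler_normD _ _) _.
by rewrite -nat1r mulrDl mul1r addrC lerD.
Qed.

Lemma find_k K N : (Nk K <= N)%N -> exists k, (K <= k)%N /\ (Nk k <= N < Nk k.+1)%N.
Proof.
move=> h; rewrite -(subnKC h); move: (N - Nk K)%N => d {h N}.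
elim: d => [|d [k [Kk /andP[h1 h2]]]].
  by exists K; split; [|rewrite addn0 leqnn Ninc].
case: (ltnP (Nk K + d.+1) (Nk k.+1)) => h3.
  by exists k; split => //; apply/andP; split => //; lia.
exists k.+1; split; first lia.
have := Ninc k.+1; move=> h4; apply/andP; split; lia.
Qed.

Lemma interp :
 (forall e : R, 0 < e -> exists K, forall k, (K <= k)%N -> (Nk k.+1 - Nk k)%:R <= e * (Nk k)%:R) ->
 (forall e : R, 0 < e -> exists K, forall k, (K <= k)%N -> `|S (Nk k)| <= e * (Nk k)%:R) ->
 forall e : R, 0 < e -> exists N0, forall N, (N0 <= N)%N -> `|S N| <= e * N%:R.
Proof.
move=> Hr HS e e0.
have B0 : 0 <= B by apply: le_trans (uB 0); exact: normr_ge0.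
have [K1 HK1] := HS (e / 2) ltac:(lra).
have eB : 0 < e / (2 * (B + 1)) by apply: divr_gt0; lra.
have [K2 HK2] := Hr _ eB.
exists (Nk (maxn K1 K2)) => N hN.
have [k [Kk /andP[h1 h2]]] := find_k hN.
have k1 : (K1 <= k)%N by lia.
have k2 : (K2 <= k)%N by lia.
have := S_diff (Nk k) (N - Nk k).
rewrite subnKC //.
move=> hd.
have hS := HK1 k k1.
have hr := HK2 k k2.
have dle : (N - Nk k)%:R <= (Nk k.+1 - Nk k)%:R :> R by rewrite ler_nat; lia.
have nN : (Nk k)%:R <= N%:R :> R by rewrite ler_nat.
set n := (Nk k)%:R in hS hr nN.
set r := (Nk k.+1 - Nk k)%:R in hr dle.
set dd := (N - Nk k)%:R in hd dle.
have n0 : 0 <= n by rewrite /n ler0n.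
have rB : r * (B + 1) <= e / 2 * n.
  apply: le_trans (ler_wpM2r _ hr) _; first lra.
  have hB : B + 1 != 0 by apply/eqP; lra.
  by rewrite (_ : e / (2 * (B + 1)) * n * (B + 1) = e / 2 * n) //; field.
have ddB : dd * B <= r * (B + 1).
  apply: le_trans (ler_wpM2r B0 dle) _; apply: ler_wpM2l; first by rewrite /r ler0n.
  lra.
have : `|S N| <= `|S (Nk k)| + dd * B.
  have := ler_normD (S N - S (Nk k)) (S (Nk k)).
  rewrite subrK => /le_trans; apply; lra.
move=> h; apply: le_trans h _.
have : e * n <= e * N%:R by apply: ler_wpM2l; lra.
lra.
Qed.
End D.

Local Open Scope ring_scope.

Section E.
Variable R : realType.

Lemma inv_sq_partial n : \sum_(k < n) (k.+1%:R ^+ 2 : R)^-1 <= 2 - 2 / n.+1%:R.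
Proof.
elim: n => [|n IH]; first by rewrite big_ord0 divr1 subrr.
rewrite big_ord_recr /=.
apply: le_trans (lerD IH (lexx _)) _.
set x : R := n.+1%:R.
have x1 : 1 <= x by rewrite /x ler1n.
have -> : n.+2%:R = x + 1 by rewrite /x -addn1 natrD.
clearbody x.
rewrite -addrA lerD2l.
have x0 : x != 0 by apply/eqP; lra.
have x10 : x + 1 != 0 by apply/eqP; lra.
suff h : (x ^+ 2)^-1 <= 2 / x - 2 / (x + 1) by lra.
rewrite (_ : 2 / x - 2 / (x + 1) = ((x * (x + 1)) / 2)^-1); last by field; rewrite ?x0 ?x10.
have xp : 0 < x by lra.
rewrite lef_pV2 ?posrE; first nra.
- by apply: exprn_gt0.
- by apply: divr_gt0; [apply: mulr_gt0; lra|lra].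
Qed.

Local Open Scope ereal_scope.
Lemma inv_sq_fin (D : R) : (0 <= D)%R ->
  \sum_(k <oo) ((D / (k.+1%:R ^+ 2))%:E) < +oo.
Proof.
move=> D0.
apply: (@le_lt_trans _ _ (2 * D)%:E); last exact: ltry.
apply: lime_le.
  by apply: is_cvg_nneseries => n _ _; rewrite lee_fin divr_ge0 // exprn_ge0.
apply: nearW => n.
rewrite sumEFin lee_fin big_mkord -mulr_sumr.
rewrite mulrC ler_wpM2r //.
apply: le_trans (inv_sq_partial n) _.
by rewrite gerBl divr_ge0.
Qed.
Local Close Scope ereal_scope.

Lemma pow_bound (al : R) (q : nat) (x : R) : 0 < al -> 2 <= q%:R * al -> 1 <= x ->
  (x ^+ q) `^ (- al) <= (x ^+ 2)^-1.
Proof.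
move=> al0 qa x1.
have x0 : 0 <= x by lra.
rewrite -powR_mulrn // -powRrM -powR_invn //.
apply: ler_powR => //; lra.
Qed.

Lemma ratio (p : nat) : (0 < p)%N -> forall e : R, 0 < e -> exists K, forall k, (K <= k)%N ->
  ((k.+2 ^ p - k.+1 ^ p)%N)%:R <= e * (k.+1 ^ p)%N%:R.
Proof.
move=> p0 e e0.
have h1 : (fun k => 1 + harmonic k : R) @ \oo --> (1 : R).
  rewrite -[X in _ --> X]addr0; apply: cvgD; [exact: cvg_cst|exact: cvg_harmonic].
have h2 : (fun k => (1 + harmonic k : R) ^+ p) @ \oo --> (1 : R).
  have hc : {for (1:R), continuous (fun x : R => x ^+ p)} by exact: exprn_continuous.
  have := continuous_cvg _ hc h1.
  by rewrite expr1n; apply; exact: _.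
have /cvgrPdistC_lt/(_ e e0) [K _ HK] := h2.
exists K => k Kk.
have := HK k Kk => /=.
set y : R := k.+1%:R.
have y1 : 1 <= y by rewrite /y ler1n.
have y0 : y != 0 by apply/eqP; lra.
have -> : 1 + k.+1%:R^-1 = (y + 1) / y by rewrite /y; field.
rewrite natrB; last by rewrite leq_exp2r.
rewrite !natrX -/y (_ : k.+2%:R = y + 1); last by rewrite /y -addn1 natrD.
rewrite expr_div_n => h.
have yp : 0 < y ^+ p by apply: exprn_gt0; lra.
have := ler_norm (((y + 1) ^+ p / y ^+ p) - 1) => h3.
have h4 : (y + 1) ^+ p / y ^+ p - 1 <= e by lra.
have h5 := ler_wpM2r (ltW yp) h4.
clearbody y.
have yp0 : y ^+ p != 0 by rewrite expf_neq0.
rewrite (_ : ((y + 1) ^+ p / y ^+ p - 1) * y ^+ p = (y + 1) ^+ p - y ^+ p) in h5; last by field.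
exact: h5.
Qed.
End E.

Local Open Scope ring_scope.

Lemma sq_shift d (X : measurableType d) (R : realType) (P : probability X R)
  (g : X -> R) (c : R) : measurable_fun setT g ->
  P.-integrable setT (fun x => (g x ^+ 2)%:E) ->
  P.-integrable setT (fun x => ((g x - c) ^+ 2)%:E).
Proof.
move=> mg ig.
have i1 := integrableZl measurableT 2 ig.
have i2 := finite_measure_integrable_cst P (2 * c ^+ 2) measurableT.
have i3 := integrableD measurableT i1 i2.
apply: (le_integrable measurableT _ _ i3).
  by apply/measurable_EFinP; apply: measurable_funX; apply: measurable_funB.
move=> x _ /=.
have h1 : 0 <= (g x - c) ^+ 2 := sqr_ge0 _.
have h2 : 0 <= 2 * g x ^+ 2 + 2 * c ^+ 2 by have := sqr_ge0 (g x); have := sqr_ge0 c; lra.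
rewrite lee_fin (ger0_norm h1) (ger0_norm h2); have := sqr_ge0 (g x + c); nra.
Qed.

Lemma ae_orbit d (X : measurableType d) (R : realType) (P : probability X R)
  (T : X -> X) (g : X -> R) (M : R) : measure_preserving P T ->
  {ae P, forall x, `|g x| <= M} ->
  {ae P, forall x, forall n, `|g (iter n T x)| <= M}.
Proof.
move=> mpT H; apply: ae_foralln => n.
case: H => N [mN PN sub].
exists (iter n T @^-1` N); split.
- by rewrite -[_ @^-1` _]setTI; apply: (iter_meas mpT n).
- by move: (iter_pres mpT n mN); rewrite PN; exact.
- by move=> x /= hx; apply: sub.
Qed.

Lemma num2 (R : realType) (c00 C y w z : R) : 0 <= c00 -> 0 < C -> 1 <= y -> 1 <= w ->
  0 <= z -> z * w <= 1 ->
  (y * w * c00 + C * (y * w * (2 * y + 1)) + C * ((y * w) ^+ 2 * z)) / (y * w) ^+ 2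
    <= (c00 + 4 * C) / w.
Proof.
move=> c0 C0 y1 w1 z0 zw.
have yw : 0 < y * w by apply: mulr_gt0; lra.
rewrite ler_pdivrMr; last by apply: exprn_gt0.
have w0 : w != 0 by apply/eqP; lra.
rewrite (_ : (c00 + 4 * C) / w * (y * w) ^+ 2 = (c00 + 4 * C) * (y ^+ 2 * w)); last by field.
have h1 : y * w * c00 <= y ^+ 2 * w * c00.
  apply: ler_wpM2r => //; apply: ler_wpM2r; first lra.
  by rewrite expr2 ler_peMl //; lra.
have h2 : C * (y * w * (2 * y + 1)) <= 3 * C * (y ^+ 2 * w).
  rewrite (_ : 3 * C * (y ^+ 2 * w) = C * (y * w * (3 * y))); last by ring.
  apply: ler_wpM2l; first lra.
  apply: ler_wpM2l; first lra.
  lra.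
have h3 : C * ((y * w) ^+ 2 * z) <= C * (y ^+ 2 * w).
  rewrite (_ : (y * w) ^+ 2 * z = (y ^+ 2 * w) * (z * w)); last by ring.
  apply: ler_wpM2l; first lra.
  rewrite -[leRHS]mulr1; apply: ler_wpM2l => //.
  by apply: mulr_ge0; [apply: exprn_ge0; lra|lra].
have h4 : 0 <= C * (y ^+ 2 * w) by apply: mulr_ge0; [lra|apply: mulr_ge0; [apply: exprn_ge0|]; lra].
lra.
Qed.

Lemma t_to_HS (R : realType) (sa sb n t : nat -> R) :
  (forall k, 0 < n k) -> (forall k, t k = (sa k ^+ 2 + sb k ^+ 2) / n k ^+ 2) ->
  t @ \oo --> (0 : R) ->
  forall e : R, 0 < e -> exists K, forall k, (K <= k)%N -> `|sa k| <= e * n k.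
Proof.
move=> n0 tE tc e e0.
have e2 : 0 < e ^+ 2 by apply: exprn_gt0.
have /cvgrPdist_lt/(_ _ e2) [K _ HK] := tc.
exists K => k Kk.
have := HK k Kk; rewrite sub0r normrN tE.
have nk := n0 k.
have nk2 : 0 < n k ^+ 2 by apply: exprn_gt0.
rewrite ger0_norm; last by apply: divr_ge0; [apply: addr_ge0; apply: sqr_ge0|lra].
rewrite ltr_pdivrMr // => h.
have hs : `|sa k| ^+ 2 < (e * n k) ^+ 2.
  by rewrite -(real_normK (num_real (sa k))) in h; rewrite exprMn; nra.
have z1 := normr_ge0 (sa k).
have z2 : 0 <= e * n k by apply: mulr_ge0; lra.
apply: ltW; move: hs; rewrite ltr_pXn2r //; lra.
Qed.

Lemma avg_conv (R : realType) (g : nat -> R) (c : R) :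
  (forall e : R, 0 < e -> exists N0, forall N, (N0 <= N)%N -> `|\sum_(i < N) (g i - c)| <= e * N%:R) ->
  (fun N : nat => N%:R^-1 * \sum_(i < N) g i) @ \oo --> c.
Proof.
move=> H; apply/cvgrPdist_lt => e e0.
have e2 : 0 < e / 2 by lra.
have [N0 HN] := H _ e2.
exists (maxn N0 1) => // N hN /=.
have N1 : (1 <= N)%N := leq_trans (leq_maxr _ _) hN.
have hN0 : (N0 <= N)%N := leq_trans (leq_maxl _ _) hN.
have Np : 0 < N%:R :> R by rewrite ltr0n.
have := HN N hN0.
rewrite big_split /= sumr_const card_ord => h.
rewrite -[- c *+ N]mulr_natr in h.
have Nn0 : N%:R != 0 :> R by apply/eqP; lra.
have -> : c - N%:R^-1 * \sum_(i < N) g i = - (N%:R^-1 * (\sum_(i < N) g i + - c * N%:R)).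
  by field.
rewrite normrN normrM ger0_norm; last by rewrite invr_ge0; lra.
rewrite ltr_pdivrMl //.
apply: le_lt_trans h _.
nra.
Qed.

Lemma cmod_ge (R : realType) (re im : R) : `|re| <= cmod re im.
Proof.
rewrite /cmod -sqrtr_sqr ler_sqrt; last by apply: addr_ge0; apply: sqr_ge0.
by rewrite lerDl sqr_ge0.
Qed.

Local Open Scope ring_scope.

Unset Implicit Arguments.

Theorem mainTheorem5 (d : measure_display) (X : measurableType d) (R : realType)
  (P : probability X R) (T : X -> X) (fr fi : X -> R) (ns : nat -> nat)
  (alpha C : R) :
  measure_preserving P T ->
  measurable_fun setT fr -> measurable_fun setT fi ->
  square_integrable P fr -> square_integrable P fi ->
  ess_bounded P fr -> ess_bounded P fi ->
  {homo ns : i j / (i < j)%N >-> (i < j)%N} ->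
  0 < alpha -> 0 < C ->
  (let f0r := fun x => fr x - mean P fr in
   let f0i := fun x => fi x - mean P fi in
   forall n : nat, (1 <= n)%N ->
     cmod (inner_re P (f0r \o iter n T) (f0i \o iter n T) f0r f0i)
          (inner_im P (f0r \o iter n T) (f0i \o iter n T) f0r f0i)
     <= C * (n%:R `^ (- alpha))) ->
  {ae P, forall x,
     (avg_along T ns fr x @ \oo --> mean P fr) /\
     (avg_along T ns fi x @ \oo --> mean P fi)}.
Proof.
move=> mpT mfr mfi sqr sqi [Mr Hr] [Mi Hi] hs al0 C0 Hcor.
pose cr := mean P fr; pose ci := mean P fi.
pose a := fun x => fr x - cr; pose b := fun x => fi x - ci.
have ma : measurable_fun setT a by apply: measurable_funB.
have mb : measurable_fun setT b by apply: measurable_funB.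
have ia : P.-integrable setT (fun x => (a x ^+ 2)%:E) := sq_shift cr mfr sqr.
have ib : P.-integrable setT (fun x => (b x ^+ 2)%:E) := sq_shift ci mfi sqi.
pose c := corr P T a b.
have cC : forall p q, c p q = c q p := corrC P T a b.
have cS : forall p m, c p (m + p)%N = c 0%N m := corr_shift mpT ma mb ia ib.
have cB : forall n, (1 <= n)%N -> `|c 0%N n| <= C * n%:R `^ (- alpha).
  move=> n n1; rewrite cC.
  have -> : c n 0%N = inner_re P (a \o iter n T) (b \o iter n T) a b by [].
  apply: le_trans (cmod_ge _ (inner_im P (a \o iter n T) (b \o iter n T) a b)) _.
  exact: (Hcor n n1).
have c00 : 0 <= c 0%N 0%N.
  by apply: Rintegral_ge0 => x _; rewrite /= -!expr2 addr_ge0 ?sqr_ge0.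
have [q hq] : exists q : nat, 2 <= q%:R * alpha.
  exists (Num.bound (2 / alpha)).
  have h := archi_boundP (x := 2 / alpha) ltac:(apply: divr_ge0; lra).
  rewrite -ler_pdivrMr //; exact: ltW.
pose p := (q + 2)%N.
have p0 : (0 < p)%N by rewrite /p addn2.
pose Nk k := (k.+1 ^ p)%N.
pose Mk k := (k.+1 ^ q)%N.
pose D := c 0%N 0%N + 4 * C.
have D0 : 0 <= D by rewrite /D; lra.
pose G N x := (\sum_(i < N) a (iter (ns i) T x)) ^+ 2 + (\sum_(i < N) b (iter (ns i) T x)) ^+ 2.
have mG : forall N, measurable_fun setT (G N).
  move=> N; apply: measurable_funD; apply: measurable_funX.
    apply: (@measurable_sum _ _ _ setT 'I_N (index_enum 'I_N) (fun i x => a (iter (ns i) T x))) => i.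
    exact: (measurableT_comp ma (iter_meas mpT (ns i))).
  apply: (@measurable_sum _ _ _ setT 'I_N (index_enum 'I_N) (fun i x => b (iter (ns i) T x))) => i.
  exact: (measurableT_comp mb (iter_meas mpT (ns i))).
pose t k x := G (Nk k) x / (Nk k)%:R ^+ 2.
have t0 : forall k x, 0 <= t k x.
  by move=> k x; apply: divr_ge0; [apply: addr_ge0; apply: sqr_ge0|apply: exprn_ge0].
have mt : forall k, measurable_fun setT (fun x => (t k x)%:E).
  by move=> k; apply/measurable_EFinP; apply: measurable_funM.
have intt : forall k, (\int[P]_x (t k x)%:E <= (D / (k.+1%:R ^+ 2))%:E)%E.
  move=> k.
  have Nkp : (0 < Nk k)%N by rewrite /Nk expn_gt0.
  have Mk1 : (1 <= Mk k)%N by rewrite /Mk expn_gt0.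
  rewrite (eq_integral (fun x => (((((Nk k)%:R ^+ 2 : R)^-1)%R)%:E * (G (Nk k) x)%:E)%E)); last first.
    by move=> x _; rewrite /t -EFinM mulrC.
  have mGk : measurable_fun setT (fun x => (G (Nk k) x)%:E) by exact/measurable_EFinP.
  have G0 : forall x, setT x -> (0 <= (G (Nk k) x)%:E)%E.
    by move=> x _; rewrite lee_fin addr_ge0 ?sqr_ge0.
  have k0 : (0 <= ((((Nk k)%:R ^+ 2 : R)^-1)%R)%:E)%E by rewrite lee_fin invr_ge0 exprn_ge0.
  rewrite (@ge0_integralZl _ _ _ P setT measurableT _ mGk _ G0 k0).
  rewrite /G (int_G mpT ma mb ia ib) -EFinM lee_fin.
  have sb := sum_bound cC cS cB C0 al0 hs (Nk k) Mk1.
  apply: le_trans (ler_wpM2l _ sb) _; first by rewrite invr_ge0 exprn_ge0.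
  set x : R := k.+1%:R.
  have x1 : 1 <= x by rewrite /x ler1n.
  set y : R := (Mk k)%:R.
  set w : R := x ^+ 2.
  have ey : y = x ^+ q by rewrite /y /Mk natrX.
  have eN : (Nk k)%:R = y * w by rewrite /Nk /p natrX exprD ey.
  have e2 : ((Nk k * (Mk k).*2.+1)%N)%:R = y * w * (2 * y + 1).
    by rewrite natrM eN -addn1 natrD -muln2 natrM -/y (mulrC y 2%:R).
  rewrite e2 eN mulrC.
  have zw : y `^ (- alpha) * w <= 1.
    have h := pow_bound al0 hq x1.
    rewrite -ey -/w in h.
    have w0 : 0 < w by rewrite /w; apply: exprn_gt0; lra.
    by rewrite -(mulVf (lt0r_neq0 w0)); apply: ler_wpM2r => //; exact: ltW.
  apply: num2 => //.
  - by rewrite ey; apply: exprn_ege1.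
  - by rewrite /w; apply: exprn_ege1.
  - exact: powR_ge0.
pose F x := (\sum_(k <oo) (t k x)%:E)%E.
have mF : measurable_fun setT F.
  have := @ge0_emeasurable_sum _ _ R setT (fun k x => (t k x)%:E) xpredT.
  apply => //; move=> k x _ _; rewrite lee_fin; exact: t0.
have intF : (\int[P]_x F x < +oo)%E.
  rewrite /F integral_nneseries //; last by move=> n x _; rewrite lee_fin.
  apply: (@le_lt_trans _ _ (\sum_(k <oo) (D / (k.+1%:R ^+ 2))%:E)%E); last exact: inv_sq_fin.
  apply: lee_nneseries => //.
  by move=> n _ _; apply: integral_ge0 => x _; rewrite lee_fin.
have iF : P.-integrable setT F.
  apply/integrableP; split => //.
  rewrite (eq_integral F) //.
  move=> x _; rewrite gee0_abs //.
  by apply: nneseries_ge0 => n _ _; rewrite lee_fin.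
have aeF := integrable_ae measurableT iF.
have aer := ae_orbit mpT Hr.
have aei := ae_orbit mpT Hi.
apply: (filterS2 _ _ aeF (filterS2 _ (fun _ => @conj _ _) aer aei)).
move=> x hF [hr hi].
have Fx : (F x < +oo)%E by rewrite ltey_eq hF.
have tc : (fun k => t k x) @ \oo --> (0:R).
  by apply: cvg_series_cvg_0; exact: (nnseries_is_cvg (fun k => t0 k x) Fx).
have Nkp : forall k, 0 < (Nk k)%:R :> R by move=> k; rewrite ltr0n /Nk expn_gt0.
have Ninc : forall k, (Nk k < Nk k.+1)%N by move=> k; rewrite /Nk ltn_exp2r.
split.
- apply: (avg_conv (g := fun i => fr (iter (ns i) T x)) (c := cr)) => e e0.
  have uB : forall i, `|a (iter (ns i) T x)| <= Mr + `|cr|.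
    by move=> i; rewrite /a; apply: le_trans (ler_normB _ _) _; rewrite lerD2r; exact: hr.
  have HS := t_to_HS (sa := fun k => \sum_(i < Nk k) a (iter (ns i) T x))
     (sb := fun k => \sum_(i < Nk k) b (iter (ns i) T x)) (t := fun k => t k x) Nkp
     (fun k => erefl) tc.
  exact: (interp uB Ninc (ratio p0) HS e0).
- apply: (avg_conv (g := fun i => fi (iter (ns i) T x)) (c := ci)) => e e0.
  have uB : forall i, `|b (iter (ns i) T x)| <= Mi + `|ci|.
    by move=> i; rewrite /b; apply: le_trans (ler_normB _ _) _; rewrite lerD2r; exact: hi.
  have tE : forall k, t k x = ((\sum_(i < Nk k) b (iter (ns i) T x)) ^+ 2 +
      (\sum_(i < Nk k) a (iter (ns i) T x)) ^+ 2) / (Nk k)%:R ^+ 2.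
    by move=> k; rewrite /t /G addrC.
  have HS := t_to_HS (sb := fun k => \sum_(i < Nk k) a (iter (ns i) T x))
     (sa := fun k => \sum_(i < Nk k) b (iter (ns i) T x)) (t := fun k => t k x) Nkp
     tE tc.
  exact: (interp uB Ninc (ratio p0) HS e0).
Qed.
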